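(* Let $n_1,n_2,n_3\ge2$, $b>0$, $0<\zeta<b$, $r\le\min\{n_1,n_2\}$, $n_2n_3<s\le rn_2n_3$, $1\le m\le n_1n_2n_3$, $\Omega\sim\mathrm{Bern}(\frac{m}{n_1n_2n_3})$, and let $\mathcal{Y}_{ijk}\sim\mathrm{Poisson}(\mathcal{X}^*_{ijk})$ independently for $(i,j,k)\in\Omega$. Then there exist $0<\widetilde{\beta}_c<1$ and $\widetilde{C}>0$ such that \[ \inf_{\widetilde{\mathcal{X}}}\sup_{\mathcal{X}^*\in\widetilde{\mathfrak{U}}(r,b,s,\zeta)}\frac{\mathbb{E}_{\Omega,\mathcal{Y}_\Omega}\|\widetilde{\mathcal{X}}-\mathcal{X}^*\|_F^2}{n_1n_2n_3}\ge\widetilde{C}\min\left\{\widetilde{\Delta}b^2,\ \widetilde{\beta}_c^2\zeta\left(\frac{s-n_2n_3+rn_1n_3}{m}\right)\right\}, \] where $\varsigma=\zeta/b$, $\Delta_1=\min\{1,\frac{s-n_2n_3}{n_2n_3}\}$, $\widetilde{\Delta}=\min\{(1-\varsigma)^2,\Delta_1\}$, and the infimum is over all estimators.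
   Context: Tensor-tensor product $\diamond$: for $\mathcal{X}\in\mathbb{R}^{n_1\times n_2\times n_3}$ with frontal slices $\mathbf{X}^{(1)},\dots,\mathbf{X}^{(n_3)}$ and $\mathcal{Y}\in\mathbb{R}^{n_2\times n_4\times n_3}$, $\mathcal{X}\diamond\mathcal{Y}$ is obtained by multiplying the block-circulant matrix with $(p,q)$ block $\mathbf{X}^{((p-q)\bmod n_3+1)}$ by the vertical stack of the frontal slices of $\mathcal{Y}$ and folding back. $\Omega\sim\mathrm{Bern}(\gamma)$: each index included independently with probability $\gamma$. $\widetilde{\mathfrak{U}}(r,b,s,\zeta)=\{\mathcal{X}=\mathcal{A}\diamond\mathcal{B}\in\mathbb{R}_+^{n_1\times n_2\times n_3}:\mathcal{X}_{ijk}\ge\zeta\ \forall i,j,k,\ \mathcal{A}\in\mathbb{R}_+^{n_1\times r\times n_3},0\le\mathcal{A}_{ijk}\le1,\ \mathcal{B}\in\mathbb{R}_+^{r\times n_2\times n_3},0\le\mathcal{B}_{ijk}\le b,\ \|\mathcal{B}\|_0\le s\}$, with $\|\cdot\|_0$ the number of nonzero entries. *)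

(* Defs.v *)
From HB Require Import structures.
From mathcomp Require Import all_boot all_order all_algebra.
From mathcomp Require Import all_classical all_reals all_analysis.
Set Implicit Arguments. Unset Strict Implicit. Unset Printing Implicit Defensive.
Import Order.TTheory GRing.Theory Num.Theory.
Local Open Scope ring_scope.
Local Open Scope classical_set_scope.

Section Defs.
Variable R : realType.

Definition tensor (n1 n2 n3 : nat) := 'I_n1 -> 'I_n2 -> 'I_n3 -> R.

Definition idx (n1 n2 n3 : nat) := ('I_n1 * 'I_n2 * 'I_n3)%type.

Definition ord_csub (n : nat) (k q : 'I_n) : 'I_n :=
  Ordinal (ltn_pmod (k + n - q) (leq_ltn_trans (leq0n k) (ltn_ord k))).

(* Tensor-tensor product: frontal slice k of A <> B is
   sum_q A^{((k - q) mod n3)} * B^{(q)} (0-indexed form of the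
   block-circulant definition). *)
Definition tprod (n1 r n2 n3 : nat) (A : tensor n1 r n3) (B : tensor r n2 n3)
  : tensor n1 n2 n3 :=
  fun i j k => \sum_(l < r) \sum_(q < n3)
     A i l (ord_csub k q) * B l j q.

Definition nnz (n1 n2 n3 : nat) (B : tensor n1 n2 n3) : nat :=
  #|[set t : idx n1 n2 n3 | B t.1.1 t.1.2 t.2 != 0]|.

Definition Uset (n1 n2 n3 r : nat) (b : R) (s : nat) (zeta : R)
  : set (tensor n1 n2 n3) :=
  [set X | (forall i j k, zeta <= X i j k) /\
     exists (A : tensor n1 r n3) (B : tensor r n2 n3),
       X = tprod A B /\
       (forall i j k, 0 <= A i j k <= 1) /\
       (forall i j k, 0 <= B i j k <= b) /\
       (nnz B <= s)%N].

Definition frob2_dist (n1 n2 n3 : nat) (X Y : tensor n1 n2 n3) : R :=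
  \sum_(t : idx n1 n2 n3) (X t.1.1 t.1.2 t.2 - Y t.1.1 t.1.2 t.2) ^+ 2.

Definition bern_prob (n1 n2 n3 : nat) (gamma : R) (Om : {set idx n1 n2 n3}) : R :=
  gamma ^+ #|Om| * (1 - gamma) ^+ (#|[set: idx n1 n2 n3]| - #|Om|).

Definition poisson_pmf (lambda : R) (y : nat) : R :=
  expR (- lambda) * lambda ^+ y / (y`!)%:R.

(* An estimator sees the sampled set Omega and the counts Y_Omega,
   encoded as a nat-valued tensor vanishing outside Omega. *)
Definition estimator (n1 n2 n3 : nat) :=
  {set idx n1 n2 n3} -> {ffun idx n1 n2 n3 -> nat} -> tensor n1 n2 n3.

Definition obs_set (n1 n2 n3 : nat) (Om : {set idx n1 n2 n3})
  : set {ffun idx n1 n2 n3 -> nat} :=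
  [set Y | forall t, t \notin Om -> Y t = 0%N].

Definition risk (n1 n2 n3 : nat) (gamma : R) (est : estimator n1 n2 n3)
    (X : tensor n1 n2 n3) : \bar R :=
  (\sum_(Om : {set idx n1 n2 n3})
     (bern_prob gamma Om)%:E *
     \esum_(Y in obs_set Om)
        ((\prod_(t in Om) poisson_pmf (X t.1.1 t.1.2 t.2) (Y t)) *
         frob2_dist (est Om Y) X)%:E)%E.

Definition minimax_risk (n1 n2 n3 r : nat) (b : R) (s m : nat) (zeta : R) : \bar R :=
  let gamma : R := m%:R / (n1 * n2 * n3)%N%:R in
  ereal_inf [set ereal_sup [set (risk gamma est X * ((n1 * n2 * n3)%N%:R^-1)%:E)%E
                            | X in @Uset n1 n2 n3 r b s zeta]
            | est in [set: estimator n1 n2 n3]].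

End Defs.

Arguments Uset {R} n1 n2 n3 r b s zeta _.
Arguments minimax_risk {R} n1 n2 n3 r b s m zeta.

(* Main.v *)
From Pilot Require Import Defs.
From HB Require Import structures.
From mathcomp Require Import all_boot all_order all_algebra.
From mathcomp Require Import all_classical all_reals all_analysis.
From mathcomp Require Import ring lra zify.
Import Order.TTheory GRing.Theory Num.Theory.
Set Implicit Arguments. Unset Strict Implicit. Unset Printing Implicit Defensive.
Local Open Scope ring_scope.


Section Expo.
Variable R : realType.

Definition psum (x : R) (K : nat) : R := \sum_(y < K) x ^+ y / (y`!)%:R.

Lemma psum_seriesE x K : psum x K = series (exp_coeff x) K.
Proof. by rewrite /psum /series /= big_mkord. Qed.

Lemma psum_le x K : 0 <= x -> psum x K <= expR x.
Proof.
move=> x0; rewrite psum_seriesE /expR.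
apply: nondecreasing_cvgn_le; last exact: is_cvg_series_exp_coeff.
apply: nondecreasing_series => n _ _; exact: exp_coeff_ge0.
Qed.

Lemma psum_ge x eps : 0 < eps -> exists K, forall K', (K <= K')%N ->
  expR x - eps <= psum x K'.
Proof.
move=> e0.
move: (is_cvg_series_exp_coeff x) => /cvgrPdist_lt /(_ _ e0).
move=> [N _ HN]; exists N => K' NK'.
have := HN K' NK'; rewrite psum_seriesE /expR => /ltW.
rewrite ler_norml => /andP[h1 h2]; lra.
Qed.

Definition pois (l : R) (y : nat) : R := Pilot.Defs.poisson_pmf l y.
Definition bct (l l' : R) (y : nat) : R :=
  expR (- ((l + l') / 2)) * (Num.sqrt l * Num.sqrt l') ^+ y / (y`!)%:R.

Lemma fact_neq0 y : (y`!)%:R != 0 :> R.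
Proof. by rewrite pnatr_eq0 -lt0n fact_gt0. Qed.

Lemma pois_ge0 l y : 0 <= l -> 0 <= pois l y.
Proof.
move=> l0; rewrite /pois /Defs.poisson_pmf.
by apply: divr_ge0; [apply: mulr_ge0; [exact: expR_ge0|exact: exprn_ge0]|exact: ler0n].
Qed.

Lemma bct_ge0 l l' y : 0 <= bct l l' y.
Proof.
rewrite /bct; apply: divr_ge0; last exact: ler0n.
apply: mulr_ge0; first exact: expR_ge0.
by apply: exprn_ge0; apply: mulr_ge0; exact: sqrtr_ge0.
Qed.

Lemma sum_pois l K : \sum_(y < K) pois l y = expR (- l) * psum l K.
Proof.
rewrite /psum mulr_sumr; apply: eq_bigr => y _.
by rewrite /pois /Defs.poisson_pmf mulrA.
Qed.

Lemma sum_pois_le1 l K : 0 <= l -> \sum_(y < K) pois l y <= 1.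
Proof.
move=> l0; rewrite sum_pois.
have : expR (- l) * psum l K <= expR (- l) * expR l.
  by apply: ler_wpM2l; [exact: expR_ge0|exact: psum_le].
by rewrite -expRD addNr expR0.
Qed.

Lemma bct_sq l l' y : 0 <= l -> 0 <= l' -> bct l l' y ^+ 2 = pois l y * pois l' y.
Proof.
move=> l0 l'0.
have e : expR (- ((l + l') / 2)) ^+ 2 = expR (- l) * expR (- l').
  by rewrite expr2 -!expRD; congr expR; lra.
have s : ((Num.sqrt l * Num.sqrt l') ^+ y) ^+ 2 = l ^+ y * l' ^+ y.
  by rewrite -exprM mulnC exprM; rewrite [(_ * _) ^+ 2]exprMn !sqr_sqrtr // exprMn.
rewrite /bct /pois /Defs.poisson_pmf.
set c := expR _; set a := (_ * _) ^+ y; set f := (y`!)%:R.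
have h := fact_neq0 y.
transitivity (c ^+ 2 * a ^+ 2 / f ^+ 2); first by field.
rewrite e s /=; field; exact: h.
Qed.

Lemma sum_bct (l l' : R) K :
  \sum_(y < K) bct l l' y = expR (- ((l + l') / 2)) * psum (Num.sqrt l * Num.sqrt l') K.
Proof. rewrite /psum mulr_sumr; apply: eq_bigr => y _; by rewrite /bct mulrA. Qed.

Lemma sqrt_am (l l' : R) : 0 <= l -> 0 <= l' -> Num.sqrt l * Num.sqrt l' <= (l + l') / 2.
Proof.
move=> l0 l'0.
have u0 := sqrtr_ge0 l; have v0 := sqrtr_ge0 l'.
have hu := sqr_sqrtr l0; have hv := sqr_sqrtr l'0.
set u := Num.sqrt l in u0 hu *; set v := Num.sqrt l' in v0 hv *.
have := sqr_ge0 (u - v); rewrite -hu -hv; nra.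
Qed.

Lemma sum_bct_le1 (l l' : R) K : 0 <= l -> 0 <= l' -> \sum_(y < K) bct l l' y <= 1.
Proof.
move=> l0 l'0; rewrite sum_bct.
have : expR (- ((l + l') / 2)) * psum (Num.sqrt l * Num.sqrt l') K <=
       expR (- ((l + l') / 2)) * expR (Num.sqrt l * Num.sqrt l').
  apply: ler_wpM2l; first exact: expR_ge0.
  by apply: psum_le; apply: mulr_ge0; exact: sqrtr_ge0.
move=> h; apply: (le_trans h); rewrite -expRD expR_le1.
have := @sqrt_am l l' l0 l'0; lra.
Qed.

Lemma sum_bct_ge (l l' : R) K (zeta eta : R) : 0 < zeta -> zeta <= l -> zeta <= l' -> 0 <= eta ->
  expR (Num.sqrt l * Num.sqrt l') - eta <= psum (Num.sqrt l * Num.sqrt l') K ->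
  1 - (l - l') ^+ 2 / (8 * zeta) - eta <= \sum_(y < K) bct l l' y.
Proof.
move=> z0 zl zl' e0 hK; rewrite sum_bct.
set u := Num.sqrt l; set v := Num.sqrt l'.
have l0 : 0 <= l by lra.
have l'0 : 0 <= l' by lra.
have u0 : 0 <= u := sqrtr_ge0 l; have v0 : 0 <= v := sqrtr_ge0 l'.
have hu : u ^+ 2 = l := sqr_sqrtr l0; have hv : v ^+ 2 = l' := sqr_sqrtr l'0.
set c := expR (- ((l + l') / 2)).
have c0 : 0 <= c := expR_ge0 _.
have c1 : c <= 1 by rewrite /c expR_le1; lra.
have h1 : c * (expR (u * v) - eta) <= c * psum (u * v) K by exact: ler_wpM2l.
have h2 : c * expR (u * v) = expR (u * v - (l + l') / 2) by rewrite /c -expRD addrC.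
have h3 := expR_ge1Dx (u * v - (l + l') / 2).
have h4 : (l + l') / 2 - u * v <= (l - l') ^+ 2 / (8 * zeta).
  have uvz : zeta <= u * v.
    have : zeta ^+ 2 <= (u * v) ^+ 2 by rewrite exprMn hu hv; nra.
    rewrite ler_sqr ?nnegrE //; [lra | exact: mulr_ge0].
  have : 4 * zeta <= (u + v) ^+ 2 by nra.
  move=> h; rewrite ler_pdivlMr; last lra.
  rewrite -hu -hv.
  have -> : (u ^+ 2 - v ^+ 2) ^+ 2 = (u - v) ^+ 2 * (u + v) ^+ 2 by ring.
  have : 0 <= (u - v) ^+ 2 by exact: sqr_ge0.
  nra.
have : c * eta <= eta by nra.
nra.
Qed.

End Expo.


Section Gen.
Variable R : realType.

Lemma prod_ge_1_sum (I : finType) (x : I -> R) :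
  (forall i, 0 <= x i <= 1) -> 1 - \sum_i (1 - x i) <= \prod_i x i.
Proof.
move=> hx; rewrite /index_enum; elim: (Finite.enum I) => [|a r IH].
  by rewrite !big_nil subr0.
rewrite !big_cons.
have S0 : 0 <= \sum_(j <- r) (1 - x j).
  by apply: sumr_ge0 => i _; have := hx i; lra.
have P0 : 0 <= \prod_(j <- r) x j.
  by apply: prodr_ge0 => i _; have := hx i; lra.
have := hx a; nra.
Qed.

Lemma sum_factor (I : finType) (K : nat) (psi : I -> bool -> nat -> R) :
  \sum_(Om : {set I}) \sum_(f : {ffun I -> 'I_K}) \prod_t psi t (t \in Om) (f t)
  = \prod_t (\sum_(y < K) psi t true y + \sum_(y < K) psi t false y).
Proof.
rewrite bigA_distr; apply: eq_bigr => Om _.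
transitivity (\prod_t \sum_(y < K) psi t (t \in Om) y).
  by rewrite bigA_distr_bigA.
by apply: eq_bigr => t _; case: (t \in Om).
Qed.

Lemma sum_ind0 (K : nat) (c : R) : \sum_(y < K.+1) c * ((y : nat) == 0%N)%:R = c.
Proof.
rewrite big_ord_recl /= mulr1 big1 ?addr0 // => i _.
by rewrite /bump /= mulr0.
Qed.

End Gen.


Section Core.
Variables (R : realType) (n1 n2 n3 : nat) (gamma : R) (K : nat).
Local Notation I := (idx n1 n2 n3).
Local Notation T := (tensor R n1 n2 n3).

Definition lam (X : T) (t : I) := X t.1.1 t.1.2 t.2.
Definition phi (X : T) (t : I) (b : bool) (y : nat) : R :=
  if b then gamma * pois (lam X t) y else (1 - gamma) * (y == 0%N)%:R.
Definition PP (X : T) (Om : {set I}) (f : {ffun I -> 'I_K.+1}) : R :=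
  \prod_t phi X t (t \in Om) (f t).
Definition hY (Om : {set I}) (f : {ffun I -> 'I_K.+1}) : {ffun I -> nat} :=
  [ffun t => if t \in Om then (f t : nat) else 0%N].
Definition TR (est : estimator R n1 n2 n3) (X : T) : R :=
  \sum_(Om : {set I}) \sum_(f : {ffun I -> 'I_K.+1})
     PP X Om f * frob2_dist (est Om (hY Om f)) X.

Hypotheses (g0 : 0 <= gamma) (g1 : gamma <= 1).

Lemma phi_ge0 X t b y : 0 <= lam X t -> 0 <= phi X t b y.
Proof.
move=> l0; rewrite /phi; case: b.
  by apply: mulr_ge0; [exact: g0|exact: pois_ge0].
by apply: mulr_ge0; [rewrite subr_ge0|exact: ler0n].
Qed.

Lemma PP_ge0 X Om f : (forall t, 0 <= lam X t) -> 0 <= PP X Om f.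
Proof. by move=> h; apply: prodr_ge0 => t _; exact: phi_ge0. Qed.

Lemma mass_le1 X : (forall t, 0 <= lam X t) ->
  \sum_(Om : {set I}) \sum_(f : {ffun I -> 'I_K.+1}) PP X Om f <= 1.
Proof.
move=> h; rewrite /PP sum_factor; apply: prodr_ile1 => t _.
rewrite /phi /= sum_ind0 -mulr_sumr.
have := sum_pois_le1 K.+1 (h t); have : 0 <= \sum_(y < K.+1) pois (lam X t) y.
  by apply: sumr_ge0 => y _; exact: pois_ge0.
move=> a b; have g0' := g0; have g1' := g1; apply/andP; split; nra.
Qed.

Lemma bern_prodE (Om : {set I}) :
  bern_prob gamma Om = \prod_t (if t \in Om then gamma else 1 - gamma).
Proof.
rewrite (bigID (fun t => t \in Om)) /=.
rewrite (eq_bigr (fun _ => gamma)); last by move=> t ->.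
rewrite [X in _ = _ * X](eq_bigr (fun _ => 1 - gamma)); last by move=> t /negbTE ->.
rewrite !prodr_const /bern_prob.
have -> : #|[set: I]%classic| = #|{: I}| by rewrite (eq_cardT (fun x => mem_setT x)) cardT.
rewrite -(cardC Om) addKn.
congr (_ * _ ^+ _); apply: eq_card => x; by rewrite !inE.
Qed.

Definition Wt (X : T) (Om : {set I}) (f : {ffun I -> 'I_K.+1}) : R :=
  \prod_t (if t \in Om then pois (lam X t) (f t) else ((f t : nat) == 0%N)%:R).

Lemma PP_split X Om f : PP X Om f = bern_prob gamma Om * Wt X Om f.
Proof.
rewrite bern_prodE /PP /Wt -big_split /=; apply: eq_bigr => t _.
by rewrite /phi; case: (t \in Om).
Qed.

Definition Supp (Om : {set I}) (f : {ffun I -> 'I_K.+1}) : bool :=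
  [forall t, (t \notin Om) ==> ((f t : nat) == 0%N)].

Lemma Wt_Supp X Om f : ~~ Supp Om f -> Wt X Om f = 0.
Proof.
move/forallPn => [t]; rewrite negb_imply => /andP[tO ft].
rewrite /Wt (bigD1 t) //= (negbTE tO) (negbTE ft) mul0r.
by [].
Qed.

Lemma Wt_SuppE X Om f : Supp Om f ->
  Wt X Om f = \prod_(t in Om) pois (lam X t) (hY Om f t).
Proof.
move/forallP => hf; rewrite /Wt [RHS]big_mkcond; apply: eq_bigr => t _.
rewrite /hY ffunE; case: ifP => // tO.
by have := hf t; rewrite tO /= => /eqP ->.
Qed.

Lemma hY_inj Om : {in Supp Om &, injective (hY Om)}.
Proof.
move=> f f' /forallP hf /forallP hf' e; apply/ffunP => t.
have := congr1 (fun g : {ffun I -> nat} => g t) e; rewrite /hY !ffunE.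
case: ifP => tO.
  by move=> h; apply: val_inj.
move=> _; apply: val_inj => /=.
by have := hf t; have := hf' t; rewrite tO /= => /eqP -> /eqP ->.
Qed.

Lemma hY_obs Om f : obs_set Om (hY Om f).
Proof. by move=> t tO; rewrite /hY ffunE (negbTE tO). Qed.

Lemma risk_ge_TR est X : (forall t, 0 <= lam X t) ->
  ((TR est X)%:E <= risk gamma est X)%E.
Proof.
move=> hX; rewrite /risk /TR -sumEFin; apply: lee_sum => Om _.
under eq_bigr do rewrite PP_split -mulrA.
rewrite -mulr_sumr EFinM; apply: lee_wpmul2l.
  by rewrite lee_fin bern_prodE; apply: prodr_ge0 => t _; have g0' := g0; have g1' := g1; case: (t \in Om); lra.
set F := fun Y : {ffun I -> nat} =>
  (\prod_(t in Om) Defs.poisson_pmf (X t.1.1 t.1.2 t.2) (Y t)) * frob2_dist (est Om Y) X.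
have -> : \sum_f Wt X Om f * frob2_dist (est Om (hY Om f)) X =
          \sum_(f | Supp Om f) F (hY Om f).
  rewrite [RHS]big_mkcond; apply: eq_bigr => f _.
  case: ifPn => hf; last by rewrite Wt_Supp // mul0r.
  by rewrite Wt_SuppE.
apply: esum_ge.
set r := [seq hY Om f | f <- enum (Supp Om)].
exists [set` r]%classic.
  split; first exact: finite_seq.
  by move=> Y /= /mapP [f _ ->]; exact: hY_obs.
rewrite -fsbig_seq; last first.
  rewrite map_inj_in_uniq ?enum_uniq //.
  by move=> f f'; rewrite !mem_enum; exact: hY_inj.
rewrite big_map sumEFin big_enum_cond /=.
rewrite lee_fin le_eqVlt; apply/orP; left; apply/eqP; apply: eq_bigl => f; by rewrite andbT.
Qed.

End Core.


Lemma two_point (R : realType) (p q q0 x a a' d : R) : 0 <= p -> 0 <= q -> 0 <= q0 ->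
  q0 ^+ 2 = p * q -> (a - a') ^+ 2 = d ^+ 2 ->
  d ^+ 2 * (q0 - (p + q) / 4) <= p * (x - a) ^+ 2 + q * (x - a') ^+ 2.
Proof.
move=> p0 q0' qq0 hq hd.
have hs : 0 <= p + q by lra.
case: (eqVneq (p + q) 0) => [s0|sn0].
  have pe : p = 0 by lra.
  have qe : q = 0 by lra.
  have : q0 ^+ 2 = 0 by rewrite hq pe mul0r.
  move/eqP; rewrite sqrf_eq0 => /eqP ->.
  rewrite s0 pe qe; lra.
have spos : 0 < p + q by rewrite lt_neqAle eq_sym sn0 hs.
have key : (p + q) * (p * (x - a) ^+ 2 + q * (x - a') ^+ 2) =
           (p * (x - a) + q * (x - a')) ^+ 2 + p * q * d ^+ 2.
  rewrite -hd; ring.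
have h1 : q0 ^+ 2 * d ^+ 2 <= (p + q) * (p * (x - a) ^+ 2 + q * (x - a') ^+ 2).
  rewrite key hq; have := sqr_ge0 (p * (x - a) + q * (x - a')); lra.
have h2 : d ^+ 2 * (q0 - (p + q) / 4) * (p + q) <= q0 ^+ 2 * d ^+ 2.
  have := sqr_ge0 (q0 - (p + q) / 2); have := sqr_ge0 d; nra.
rewrite -(ler_pM2r spos); rewrite mulrC in h1; lra.
Qed.

Section BC.
Variables (R : realType) (n1 n2 n3 : nat) (gamma : R) (K : nat) (zeta eta : R).
Hypotheses (g0 : 0 <= gamma) (g1 : gamma <= 1) (z0 : 0 < zeta) (e0 : 0 <= eta).
Local Notation I := (idx n1 n2 n3).
Local Notation T := (tensor R n1 n2 n3).

Definition psiQ (X X' : T) (t : I) (b : bool) (y : nat) : R :=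
  if b then gamma * bct (lam X t) (lam X' t) y else (1 - gamma) * (y == 0%N)%:R.
Definition Qb (X X' : T) (Om : {set I}) (f : {ffun I -> 'I_K.+1}) : R :=
  \prod_t psiQ X X' t (t \in Om) (f t).

Lemma Qb_ge0 X X' Om f : 0 <= Qb X X' Om f.
Proof.
apply: prodr_ge0 => t _; rewrite /psiQ; have g0' := g0; have g1' := g1.
case: (t \in Om); apply: mulr_ge0; rewrite ?subr_ge0 ?ler0n //; exact: bct_ge0.
Qed.

Lemma Qb_sq X X' Om f : (forall t, 0 <= lam X t) -> (forall t, 0 <= lam X' t) ->
  Qb X X' Om f ^+ 2 = PP gamma X Om f * PP gamma X' Om f.
Proof.
move=> h h'; rewrite /Qb /PP -prodrXl -big_split /=; apply: eq_bigr => t _.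
rewrite /psiQ /phi; case: (t \in Om).
  by rewrite exprMn bct_sq // expr2; ring.
by rewrite exprMn; case: (_ == _); rewrite ?expr2 /=; ring.
Qed.

Lemma BC_ge X X' : (forall t, zeta <= lam X t) -> (forall t, zeta <= lam X' t) ->
  (forall t, expR (Num.sqrt (lam X t) * Num.sqrt (lam X' t)) - eta <=
             psum (Num.sqrt (lam X t) * Num.sqrt (lam X' t)) K.+1) ->
  \sum_t (gamma * ((lam X t - lam X' t) ^+ 2 / (8 * zeta)) + eta) <= 1/4 ->
  3/4 <= \sum_(Om : {set I}) \sum_(f : {ffun I -> 'I_K.+1}) Qb X X' Om f.
Proof.
move=> hX hX' hK hsum; rewrite /Qb sum_factor.
have g0' := g0; have g1' := g1; have z0' := z0; have e0' := e0.
set x := fun t => gamma * \sum_(y < K.+1) bct (lam X t) (lam X' t) y + (1 - gamma).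
have -> : \prod_t (\sum_(y < K.+1) psiQ X X' t true y + \sum_(y < K.+1) psiQ X X' t false y)
          = \prod_t x t.
  by apply: eq_bigr => t _; rewrite /psiQ /x sum_ind0 -mulr_sumr.
have Sb t : 0 <= \sum_(y < K.+1) bct (lam X t) (lam X' t) y <= 1.
  apply/andP; split; first by apply: sumr_ge0 => y _; exact: bct_ge0.
  by apply: sum_bct_le1; apply: le_trans (ltW z0) _.
have x01 t : 0 <= x t <= 1.
  by have /andP[a b] := Sb t; rewrite /x; apply/andP; split; nra.
apply: le_trans (prod_ge_1_sum x01).
have hb t : 1 - x t <= gamma * ((lam X t - lam X' t) ^+ 2 / (8 * zeta)) + eta.
  have := sum_bct_ge (K := K.+1) z0 (hX t) (hX' t) e0 (hK t).
  have /andP[a b] := Sb t; rewrite /x; nra.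
have : \sum_t (1 - x t) <= \sum_t (gamma * ((lam X t - lam X' t) ^+ 2 / (8 * zeta)) + eta).
  by apply: ler_sum => t _; exact: hb.
move=> h; lra.
Qed.

Lemma lin3 (J : finType) (u v : R) (A B C : J -> R) :
  \sum_i (u * A i - v * B i - v * C i) = u * \sum_i A i - v * \sum_i B i - v * \sum_i C i.
Proof. by rewrite !sumrB !mulr_sumr. Qed.

Lemma pair_ge X X' (Ef : {set I} -> {ffun I -> 'I_K.+1} -> R) t0 d :
  (forall t, zeta <= lam X t) -> (forall t, zeta <= lam X' t) ->
  (forall t, expR (Num.sqrt (lam X t) * Num.sqrt (lam X' t)) - eta <=
             psum (Num.sqrt (lam X t) * Num.sqrt (lam X' t)) K.+1) ->
  \sum_t (gamma * ((lam X t - lam X' t) ^+ 2 / (8 * zeta)) + eta) <= 1/4 ->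
  (lam X t0 - lam X' t0) ^+ 2 = d ^+ 2 ->
  d ^+ 2 / 4 <=
  \sum_(Om : {set I}) \sum_(f : {ffun I -> 'I_K.+1}) PP gamma X Om f * (Ef Om f - lam X t0) ^+ 2 +
  \sum_(Om : {set I}) \sum_(f : {ffun I -> 'I_K.+1}) PP gamma X' Om f * (Ef Om f - lam X' t0) ^+ 2.
Proof.
move=> hX hX' hK hsum hd.
have l0 t : 0 <= lam X t by apply: le_trans (ltW z0) _.
have l0' t : 0 <= lam X' t by apply: le_trans (ltW z0) _.
have M := mass_le1 K g0 g1 l0.
have M' := mass_le1 K g0 g1 l0'.
have B := BC_ge hX hX' hK hsum.
have pw Om f : d ^+ 2 * Qb X X' Om f - d ^+ 2 / 4 * PP gamma X Om f - d ^+ 2 / 4 * PP gamma X' Om f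
   <= PP gamma X Om f * (Ef Om f - lam X t0) ^+ 2 + PP gamma X' Om f * (Ef Om f - lam X' t0) ^+ 2.
  have p0 : 0 <= PP gamma X Om f by apply: PP_ge0.
  have p0' : 0 <= PP gamma X' Om f by apply: PP_ge0.
  have := two_point (Ef Om f) p0 p0' (Qb_ge0 X X' Om f) (Qb_sq Om f l0 l0') hd.
  lra.
rewrite -big_split /=.
have : \sum_(Om : {set I}) \sum_(f : {ffun I -> 'I_K.+1})
   (d ^+ 2 * Qb X X' Om f - d ^+ 2 / 4 * PP gamma X Om f - d ^+ 2 / 4 * PP gamma X' Om f) <=
   \sum_(Om : {set I}) (\sum_(f : {ffun I -> 'I_K.+1}) PP gamma X Om f * (Ef Om f - lam X t0) ^+ 2 +
   \sum_(f : {ffun I -> 'I_K.+1}) PP gamma X' Om f * (Ef Om f - lam X' t0) ^+ 2).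
  apply: ler_sum => Om _; rewrite -big_split /=; apply: ler_sum => f _; exact: pw.
have -> : \sum_(Om : {set I}) \sum_(f : {ffun I -> 'I_K.+1})
   (d ^+ 2 * Qb X X' Om f - d ^+ 2 / 4 * PP gamma X Om f - d ^+ 2 / 4 * PP gamma X' Om f) =
   d ^+ 2 * (\sum_(Om : {set I}) \sum_(f : {ffun I -> 'I_K.+1}) Qb X X' Om f)
   - d ^+ 2 / 4 * (\sum_(Om : {set I}) \sum_(f : {ffun I -> 'I_K.+1}) PP gamma X Om f)
   - d ^+ 2 / 4 * (\sum_(Om : {set I}) \sum_(f : {ffun I -> 'I_K.+1}) PP gamma X' Om f).
  rewrite -lin3; apply: eq_bigr => Om _; exact: lin3.
have := sqr_ge0 d.
nra.
Qed.

End BC.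


Section Hyp.
Variables (R : realType) (n1 n2 n3 : nat) (gamma : R) (K : nat) (zeta delta eta : R).
Variables (E : finType) (blk : idx n1 n2 n3 -> E).
Hypotheses (g0 : 0 <= gamma) (g1 : gamma <= 1) (z0 : 0 < zeta) (d0 : 0 <= delta) (e0 : 0 <= eta).
Local Notation I := (idx n1 n2 n3).
Local Notation T := (tensor R n1 n2 n3).

Definition Xw (w : {ffun E -> bool}) : T := fun i j k => zeta + delta * (w (blk (i, j, k)))%:R.

Lemma lam_Xw w t : lam (Xw w) t = zeta + delta * (w (blk t))%:R.
Proof. by case: t => [[i j] k]. Qed.

Definition flip (e : E) (w : {ffun E -> bool}) : {ffun E -> bool} :=
  [ffun e' => if e' == e then ~~ w e' else w e'].

Lemma flipK e : cancel (flip e) (flip e).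
Proof.
move=> w; apply/ffunP => e'; rewrite !ffunE.
by case: eqP => // ->; rewrite negbK.
Qed.

Lemma lam_flip w t : (lam (Xw w) t - lam (Xw (flip (blk t) w)) t) ^+ 2 = delta ^+ 2.
Proof.
rewrite !lam_Xw ffunE eqxx; case: (w (blk t)) => /=; ring.
Qed.

Lemma lam_flip2 e w t : (lam (Xw w) t - lam (Xw (flip e w)) t) ^+ 2 =
   if blk t == e then delta ^+ 2 else 0.
Proof.
rewrite !lam_Xw ffunE; case: eqP => _; last by rewrite subrr expr0n.
by case: (w (blk t)) => /=; ring.
Qed.

Definition G (est : estimator R n1 n2 n3) (t : I) (w : {ffun E -> bool}) : R :=
  \sum_(Om : {set I}) \sum_(f : {ffun I -> 'I_K.+1})
    PP gamma (Xw w) Om f * (est Om (hY Om f) t.1.1 t.1.2 t.2 - lam (Xw w) t) ^+ 2.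

Lemma TR_G est w : TR gamma K est (Xw w) = \sum_t G est t w.
Proof.
rewrite /TR /G.
under eq_bigr => Om _ do under eq_bigr => f _ do rewrite /frob2_dist mulr_sumr.
under eq_bigr => Om _ do rewrite exchange_big.
by rewrite exchange_big.
Qed.

Hypothesis hK : forall b b' : bool,
  let l := zeta + delta * b%:R in let l' := zeta + delta * b'%:R in
  expR (Num.sqrt l * Num.sqrt l') - eta <= psum (Num.sqrt l * Num.sqrt l') K.+1.
Hypothesis hblk : forall e, #|[pred t | blk t == e]|%:R * gamma * delta ^+ 2 <= zeta.
Hypothesis heta : #|{: I}|%:R * eta <= 1/8.

Lemma G_pair est t w : delta ^+ 2 / 4 <= G est t w + G est t (flip (blk t) w).
Proof.
have z0' := z0; have d0' := d0; have g0' := g0.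
have hb (b : bool) : zeta <= zeta + delta * b%:R.
  by case: b => /=; rewrite ?mulr1 ?mulr0; lra.
have hX : forall t', zeta <= lam (Xw w) t' by move=> t'; rewrite lam_Xw; apply: hb.
have hX' : forall t', zeta <= lam (Xw (flip (blk t) w)) t'.
  by move=> t'; rewrite lam_Xw; apply: hb.
have hK' : forall t', expR (Num.sqrt (lam (Xw w) t') * Num.sqrt (lam (Xw (flip (blk t) w)) t')) - eta <=
             psum (Num.sqrt (lam (Xw w) t') * Num.sqrt (lam (Xw (flip (blk t) w)) t')) K.+1.
  by move=> t'; rewrite !lam_Xw; exact: hK.
have hs : \sum_t' (gamma * ((lam (Xw w) t' - lam (Xw (flip (blk t) w)) t') ^+ 2 / (8 * zeta)) + eta) <= 1/4.
  rewrite big_split /= sumr_const.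
  under eq_bigr do rewrite lam_flip2.
  rewrite (eq_bigr (fun i => if blk i == blk t then gamma * (delta ^+ 2 / (8 * zeta)) else 0));
    last by move=> i _; case: ifP => _ //; rewrite mul0r mulr0.
  rewrite -big_mkcond /= sumr_const.
  set c := #|_|; set c2 := #|_|.
  have hc : c = #|[pred i | blk i == blk t]| by apply: eq_card.
  have hc2 : c2 = #|{: I}| by apply: eq_card.
  rewrite -[_ *+ c]mulr_natl -[_ *+ c2]mulr_natl.
  have h1 : c%:R * gamma * delta ^+ 2 <= zeta by rewrite hc; exact: hblk.
  have h2 : c2%:R * eta <= 1/8 by rewrite hc2.
  have : c%:R * gamma * delta ^+ 2 / (8 * zeta) <= 1/8.
    by rewrite ler_pdivrMr; lra.
  have -> : c%:R * (gamma * (delta ^+ 2 / (8 * zeta))) = c%:R * gamma * delta ^+ 2 / (8 * zeta).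
    by field; lra.
  lra.
exact: (pair_ge g0 g1 z0 e0 (fun Om f => est Om (hY Om f) t.1.1 t.1.2 t.2) hX hX' hK' hs (lam_flip w t)).
Qed.

Lemma sumG est t :
  #|{: {ffun E -> bool}}|%:R * delta ^+ 2 / 8 <= \sum_w G est t w.
Proof.
have e : \sum_w G est t w = \sum_w G est t (flip (blk t) w).
  exact: (reindex_inj (can_inj (flipK (blk t)))).
have : \sum_(w : {ffun E -> bool}) delta ^+ 2 / 4 <=
       \sum_w (G est t w + G est t (flip (blk t) w)).
  by apply: ler_sum => w _; exact: G_pair.
rewrite big_split /= -e sumr_const => h.
set c := #|_| in h.
have hc : c = #|{: {ffun E -> bool}}| by apply: eq_card.
rewrite -[_ *+ c]mulr_natl hc in h.
have := sqr_ge0 delta; lra.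
Qed.

Lemma exists_w est : exists w,
  #|{: I}|%:R * delta ^+ 2 / 8 <= TR gamma K est (Xw w).
Proof.
have S : #|{: I}|%:R * (#|{: {ffun E -> bool}}|%:R * delta ^+ 2 / 8) <= \sum_(w : {ffun E -> bool}) TR gamma K est (Xw w).
  under [X in _ <= X]eq_bigr do rewrite TR_G.
  rewrite exchange_big /=.
  have : \sum_(t : I) (#|{: {ffun E -> bool}}|%:R * delta ^+ 2 / 8) <= \sum_t \sum_(w : {ffun E -> bool}) G est t w.
    by apply: ler_sum => t _; exact: sumG.
  rewrite sumr_const => h.
  set c := #|_| in h.
  have hc : c = #|{: I}| by apply: eq_card.
  by rewrite -[_ *+ c]mulr_natl hc in h.
case: (@arg_maxP _ R {ffun E -> bool} [ffun=> false] xpredT (fun w => TR gamma K est (Xw w)) isT) => wm _ Hm.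
exists wm.
have : \sum_(w : {ffun E -> bool}) TR gamma K est (Xw w) <= \sum_(w : {ffun E -> bool}) TR gamma K est (Xw wm).
  by apply: ler_sum => w _; exact: Hm.
rewrite sumr_const => h.
set c := #|_| in h.
have hc : c = #|{: {ffun E -> bool}}| by apply: eq_card.
rewrite -[_ *+ c]mulr_natl hc in h.
have cpos : (0 < #|{: {ffun E -> bool}}|)%N by apply/card_gt0P; exists [ffun=> false].
have cpos' : 0 < #|{: {ffun E -> bool}}|%:R :> R by rewrite ltr0n.
have : #|{: {ffun E -> bool}}|%:R * (#|{: I}|%:R * delta ^+ 2 / 8) <= #|{: {ffun E -> bool}}|%:R * TR gamma K est (Xw wm).
  have -> : #|{: {ffun E -> bool}}|%:R * (#|{: I}|%:R * delta ^+ 2 / 8) =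
            #|{: I}|%:R * (#|{: {ffun E -> bool}}|%:R * delta ^+ 2 / 8) by ring.
  lra.
by rewrite ler_pM2l.
Qed.

End Hyp.


Lemma eqle (R : realType) (x y : R) : x = y -> x <= y.
Proof. by move=> ->. Qed.

Lemma cardI n1 n2 n3 : #|{: idx n1 n2 n3}| = (n1 * n2 * n3)%N.
Proof. by rewrite !card_prod !card_ord. Qed.

Lemma K_exists (R : realType) (zeta delta eta : R) : 0 < eta ->
  exists K0, forall (b b' : bool) K', (K0 <= K')%N ->
  let l := zeta + delta * b%:R in let l' := zeta + delta * b'%:R in
  expR (Num.sqrt l * Num.sqrt l') - eta <= psum (Num.sqrt l * Num.sqrt l') K'.
Proof.
move=> e0.
have [k1 h1] := psum_ge (Num.sqrt (zeta + delta * false%:R) * Num.sqrt (zeta + delta * false%:R)) e0.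
have [k2 h2] := psum_ge (Num.sqrt (zeta + delta * false%:R) * Num.sqrt (zeta + delta * true%:R)) e0.
have [k3 h3] := psum_ge (Num.sqrt (zeta + delta * true%:R) * Num.sqrt (zeta + delta * false%:R)) e0.
have [k4 h4] := psum_ge (Num.sqrt (zeta + delta * true%:R) * Num.sqrt (zeta + delta * true%:R)) e0.
exists (maxn (maxn k1 k2) (maxn k3 k4)) => b b' K' hK /=.
move: hK; rewrite !geq_max => /andP[/andP[a1 a2] /andP[a3 a4]].
by case: b; case: b'; [exact: h4|exact: h3|exact: h2|exact: h1].
Qed.

Theorem core (R : realType) (n1 n2 n3 r : nat) (b : R) (s m : nat) (zeta delta : R)
  (E : finType) (blk : idx n1 n2 n3 -> E) :
  (0 < n1 * n2 * n3)%N -> (m <= n1 * n2 * n3)%N -> 0 < zeta -> 0 <= delta ->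
  (forall e, #|[pred t | blk t == e]|%:R * (m%:R / (n1 * n2 * n3)%N%:R) * delta ^+ 2 <= zeta) ->
  (forall w, Uset n1 n2 n3 r b s zeta (Xw zeta delta blk w)) ->
  ((delta ^+ 2 / 8)%:E <= minimax_risk n1 n2 n3 r b s m zeta)%E.
Proof.
move=> Npos mN z0 d0 hblk hU.
set N := (n1 * n2 * n3)%N.
set gamma : R := m%:R / N%:R.
have Npos' : 0 < N%:R :> R by rewrite ltr0n.
have g0 : 0 <= gamma by apply: divr_ge0; exact: ler0n.
have g1 : gamma <= 1 by rewrite ler_pdivrMr // mul1r ler_nat.
set eta : R := 1 / (8 * N%:R).
have e0 : 0 < eta by apply: divr_gt0; lra.
have heta : #|{: idx n1 n2 n3}|%:R * eta <= 1/8.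
  by rewrite cardI /eta -/N; apply: eqle; field; lra.
have [K0 hK0] := K_exists zeta delta e0.
have hK : forall b0 b' : bool,
  let l := zeta + delta * b0%:R in let l' := zeta + delta * b'%:R in
  expR (Num.sqrt l * Num.sqrt l') - eta <= psum (Num.sqrt l * Num.sqrt l') K0.+1.
  by move=> b0 b'; apply: hK0; exact: leqnSn.
rewrite /minimax_risk /=; apply/ereal_infP => _ [est _ <-].
have [w hw] := exists_w g0 g1 z0 d0 (ltW e0) hK hblk heta est.
apply: le_trans (ereal_sup_ubound _); last by exists (Xw zeta delta blk w).
have l0 : forall t, 0 <= lam (Xw zeta delta blk w) t.
  move=> t; rewrite lam_Xw; case: (w _) => /=; rewrite ?mulr1 ?mulr0; lra.
have := risk_ge_TR K0 g0 g1 est l0.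
move=> hr.
have hr' : ((N%:R * delta ^+ 2 / 8)%:E <= risk gamma est (Xw zeta delta blk w))%E.
  apply: le_trans hr; rewrite lee_fin; move: hw; by rewrite cardI.
have : ((N%:R * delta ^+ 2 / 8)%:E * (N%:R^-1)%:E <= risk gamma est (Xw zeta delta blk w) * (N%:R^-1)%:E)%E.
  apply: lee_wpmul2r => //; rewrite lee_fin invr_ge0; exact: ler0n.
rewrite -EFinM; apply: le_trans; rewrite lee_fin.
apply: eqle; field; lra.
Qed.


Lemma ord_csub0 n (k q : 'I_n) : (nat_of_ord (ord_csub k q) == 0%N) = (q == k).
Proof.
rewrite /ord_csub /=.
case: (ltngtP q k) => h.
- have hq : (k + n - q = (k - q) + n)%N by lia.
  rewrite hq modnDr modn_small; last by have := ltn_ord k; lia.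
  have -> : (q == k) = false by apply/eqP => e; rewrite e ltnn in h.
  apply/negbTE/eqP; lia.
- have hq : (k + n - q < n)%N by have := ltn_ord q; lia.
  rewrite modn_small //.
  have -> : (q == k) = false by apply/eqP => e; rewrite e ltnn in h.
  apply/negbTE/eqP; have := ltn_ord q; lia.
- have -> : q = k by apply: val_inj.
  by rewrite eqxx addKn modnn.
Qed.

Lemma ord_csubq0 n (k q : 'I_n) : (nat_of_ord q = 0%N) -> ord_csub k q = k.
Proof.
move=> q0; apply: val_inj; rewrite /ord_csub /= q0 subn0 modnDr modn_small //.
Qed.

Lemma hbool (R : realType) (zeta delta : R) (c : bool) : 0 <= delta ->
  zeta <= zeta + delta * c%:R.
Proof. by move=> d0; case: c => /=; rewrite ?mulr1 ?mulr0; lra. Qed.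

Lemma hbool2 (R : realType) (zeta delta b : R) (c : bool) : 0 <= delta -> zeta + delta <= b ->
  zeta + delta * c%:R <= b.
Proof. by move=> d0 h; case: c => /=; rewrite ?mulr1 ?mulr0; lra. Qed.

Definition blkA n1 n2 n3 r (rpos : (0 < r)%N) (t : idx n1 n2 n3) : ('I_n1 * 'I_r * 'I_n3)%type :=
  (t.1.1, Ordinal (ltn_pmod t.1.2 rpos), t.2).

Lemma UsetA (R : realType) n1 n2 n3 r s (b zeta delta : R) (rpos : (0 < r)%N) :
  (0 < n3)%N -> (n2 <= s)%N -> 0 < b -> 0 < zeta -> 0 <= delta -> zeta + delta <= b ->
  forall w, Uset n1 n2 n3 r b s zeta (Xw zeta delta (@blkA n1 n2 n3 r rpos) w).
Proof.
move=> n3pos n2s b0 z0 d0 zdb w.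
split.
  by move=> i j k; rewrite /Xw; apply: hbool.
pose A : tensor R n1 r n3 := fun i l k => (zeta + delta * (w (i, l, k))%:R) / b.
pose B : tensor R r n2 n3 := fun l j q =>
  if ((q : nat) == 0%N) && ((j %% r)%N == l) then b else 0.
exists A, B; split; [|split; [|split]].
- apply/funext => i; apply/funext => j; apply/funext => k.
  rewrite /tprod.
  set jr : 'I_r := Ordinal (ltn_pmod j rpos).
  set q0 : 'I_n3 := Ordinal n3pos.
  rewrite (bigD1 jr) //= [X in _ + X]big1 ?addr0; last first.
    move=> l hl; apply: big1 => q _; rewrite /B.
    have -> : ((j %% r)%N == l) = false.
      by apply/negbTE; apply: contra hl => /eqP e; apply/eqP/val_inj.
    by rewrite andbF mulr0.
  rewrite (bigD1 q0) //= [X in _ + X]big1 ?addr0; last first.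
    move=> q hq; rewrite /B.
    have -> : ((q : nat) == 0%N) = false.
      by apply/negbTE; apply: contra hq => /eqP e; apply/eqP/val_inj.
    by rewrite mulr0.
  rewrite /B /= eqxx /= ord_csubq0 // /A /Xw /blkA /=.
  by field; rewrite gt_eqF.
- move=> i l k; rewrite /A; apply/andP; split.
    apply: divr_ge0; last lra.
    by apply: le_trans (ltW z0) _; exact: hbool.
  by rewrite ler_pdivrMr // mul1r; apply: hbool2.
- move=> l j q; rewrite /B; case: ifP => _; apply/andP; split; lra.
- rewrite /nnz; apply: leq_trans n2s.
  set S := [set t : idx r n2 n3 | B t.1.1 t.1.2 t.2 != 0]%classic.
  have inj : {in S &, injective (fun t : idx r n2 n3 => t.1.2)}.
    move=> [[l j] q] [[l' j'] q']; rewrite !in_setE /S /B /=.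
    case: ifP => [/andP[/eqP q0 /eqP lj] _|]; last by rewrite eqxx.
    case: ifP => [/andP[/eqP q0' /eqP lj'] _|]; last by rewrite eqxx.
    move=> e; subst j'.
    have el : l = l' by apply: ord_inj; rewrite -lj -lj'.
    have eq : q = q' by apply: ord_inj; rewrite q0 q0'.
    by rewrite el eq.
  rewrite -(card_in_imset inj); apply: leq_trans (max_card _) _.
  by rewrite card_ord.
Qed.

Lemma blkA_card n1 n2 n3 r (rpos : (0 < r)%N) e :
  (#|[pred t | @blkA n1 n2 n3 r rpos t == e]| <= (n2 %/ r).+1)%N.
Proof.
set S := [pred t | @blkA n1 n2 n3 r rpos t == e].
pose f := fun t : idx n1 n2 n3 => (inord (t.1.2 %/ r) : 'I_(n2 %/ r).+1).
have hle (j : 'I_n2) : (j %/ r <= n2 %/ r)%N by apply: leq_div2r; exact: ltnW.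
have inj : {in S &, injective f}.
  move=> [[i j] k] [[i' j'] k']; rewrite !inE /blkA /= => /eqP h1 /eqP h2.
  rewrite -h2 in h1; case: h1 => ei ej ek; subst i' k'.
  move=> /(congr1 val); rewrite /f /= !inordK ?ltnS ?hle // => ed.
  have : j = j' :> nat by rewrite (divn_eq j r) (divn_eq j' r) ed ej.
  by move=> /val_inj ->.
rewrite -(card_in_imset inj); apply: leq_trans (max_card _) _.
by rewrite card_ord.
Qed.

Definition blkB n1 n2 n3 g (gpos : (0 < g)%N) (t : idx n1 n2 n3) : ('I_g * 'I_n2 * 'I_n3)%type :=
  (Ordinal (ltn_pmod t.1.1 gpos), t.1.2, t.2).

Lemma UsetB (R : realType) n1 n2 n3 r s (b zeta delta : R) g (gpos : (0 < g)%N) :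
  (g <= r)%N -> (g * n2 * n3 <= s)%N -> 0 < b -> 0 < zeta -> 0 <= delta -> zeta + delta <= b ->
  forall w, Uset n1 n2 n3 r b s zeta (Xw zeta delta (@blkB n1 n2 n3 g gpos) w).
Proof.
move=> gr gs b0 z0 d0 zdb w.
split.
  by move=> i j k; rewrite /Xw; apply: hbool.
pose A : tensor R n1 r n3 := fun i l k =>
  if ((k : nat) == 0%N) && ((l : nat) == (i %% g)%N) then 1 else 0.
pose B : tensor R r n2 n3 := fun l j q =>
  if ((l : nat) < g)%N then zeta + delta * (w (Ordinal (ltn_pmod l gpos), j, q))%:R else 0.
exists A, B; split; [|split; [|split]].
- apply/funext => i; apply/funext => j; apply/funext => k.
  rewrite /tprod.
  set li : 'I_r := Ordinal (leq_trans (ltn_pmod i gpos) gr).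
  rewrite (bigD1 li) //= [X in _ + X]big1 ?addr0; last first.
    move=> l hl; apply: big1 => q _; rewrite /A.
    have -> : ((l : nat) == (i %% g)%N) = false.
      by apply/negbTE; apply: contra hl => /eqP e; apply/eqP/val_inj.
    by rewrite andbF mul0r.
  rewrite (bigD1 k) //= [X in _ + X]big1 ?addr0; last first.
    move=> q hq; rewrite /A ord_csub0 (negbTE hq) /=.
    by rewrite mul0r.
  rewrite /A ord_csub0 !eqxx /= mul1r /B /= ltn_pmod //.
  rewrite /Xw /blkB /=.
  have -> : Ordinal (ltn_pmod (i %% g) gpos) = Ordinal (ltn_pmod i gpos) by apply: val_inj; rewrite /= modn_mod.
  by [].
- move=> i l k; rewrite /A; case: ifP => _; apply/andP; split; lra.
- move=> l j q; rewrite /B; case: ifP => _; apply/andP; split; try lra.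
    by apply: le_trans (ltW z0) _; exact: hbool.
  exact: hbool2.
- rewrite /nnz; apply: leq_trans gs.
  set S := [set t : idx r n2 n3 | B t.1.1 t.1.2 t.2 != 0]%classic.
  pose f := fun t : idx r n2 n3 => ((Ordinal (ltn_pmod t.1.1 gpos), t.1.2, t.2) : 'I_g * 'I_n2 * 'I_n3).
  have inj : {in S &, injective f}.
    move=> [[l j] q] [[l' j'] q']; rewrite !in_setE /S /B /f /=.
    case: ifP => [lg _|]; last by rewrite eqxx.
    case: ifP => [lg' _|]; last by rewrite eqxx.
    case=> e ej eq; subst j' q'.
    have el : l = l' by apply: ord_inj; rewrite -(modn_small lg) -(modn_small lg').
    by rewrite el.
  rewrite -(card_in_imset inj); apply: leq_trans (max_card _) _.
  by rewrite !card_prod !card_ord.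
Qed.

Lemma blkB_card n1 n2 n3 g (gpos : (0 < g)%N) e :
  (#|[pred t | @blkB n1 n2 n3 g gpos t == e]| <= (n1 %/ g).+1)%N.
Proof.
set S := [pred t | @blkB n1 n2 n3 g gpos t == e].
pose f := fun t : idx n1 n2 n3 => (inord (t.1.1 %/ g) : 'I_(n1 %/ g).+1).
have hle (i : 'I_n1) : (i %/ g <= n1 %/ g)%N by apply: leq_div2r; exact: ltnW.
have inj : {in S &, injective f}.
  move=> [[i j] k] [[i' j'] k']; rewrite !inE /blkB /= => /eqP h1 /eqP h2.
  rewrite -h2 in h1; case: h1 => ei ej ek; subst j' k'.
  move=> /(congr1 val); rewrite /f /= !inordK ?ltnS ?hle // => ed.
  have : i = i' :> nat by rewrite (divn_eq i g) (divn_eq i' g) ed ei.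
  by move=> /val_inj ->.
rewrite -(card_in_imset inj); apply: leq_trans (max_card _) _.
by rewrite card_ord.
Qed.


Lemma final_arith (R : realType) (Delta b zeta D m N L : R) :
  Delta * b ^+ 2 <= (b - zeta) ^+ 2 -> 0 < m -> 0 < L -> 0 < zeta -> 0 < N -> D * L <= 8 * N ->
  Num.min (Delta * b ^+ 2) ((1/2) ^+ 2 * zeta * (D / m)) <=
  2 * Num.min ((b - zeta) ^+ 2) (zeta * N / (m * L)).
Proof.
move=> h1 m0 L0 z0 N0 key.
set T := Num.min _ _.
have T1 : T <= Delta * b ^+ 2 by rewrite /T ge_min lexx.
have T2 : T <= (1/2) ^+ 2 * zeta * (D / m) by rewrite /T ge_min lexx orbT.
have h2 : (1/2) ^+ 2 * zeta * (D / m) <= 2 * (zeta * N / (m * L)).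
  rewrite -subr_ge0.
  have -> : 2 * (zeta * N / (m * L)) - (1/2) ^+ 2 * zeta * (D / m) =
            zeta * (8 * N - D * L) / (4 * m * L) by field; lra.
  apply: mulr_ge0; first by apply: mulr_ge0; lra.
  rewrite invr_ge0; apply: mulr_ge0; lra.
suff H : T / 2 <= Num.min ((b - zeta) ^+ 2) (zeta * N / (m * L)) by lra.
have := sqr_ge0 (b - zeta); rewrite le_min => sq; apply/andP; split; lra.
Qed.

Lemma core2 (R : realType) (n1 n2 n3 r : nat) (b : R) (s m : nat) (zeta : R)
  (E : finType) (blk : idx n1 n2 n3 -> E) (L : nat) :
  (0 < n1 * n2 * n3)%N -> (1 <= m)%N -> (m <= n1 * n2 * n3)%N -> 0 < zeta -> zeta < b -> (0 < L)%N ->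
  (forall e, #|[pred t | blk t == e]| <= L)%N ->
  (forall delta, 0 <= delta -> zeta + delta <= b ->
     forall w, Uset n1 n2 n3 r b s zeta (Xw zeta delta blk w)) ->
  ((Num.min ((b - zeta) ^+ 2) (zeta * (n1 * n2 * n3)%N%:R / (m%:R * L%:R)) / 8)%:E
     <= minimax_risk n1 n2 n3 r b s m zeta)%E.
Proof.
move=> Npos m1 mN z0 zb Lpos hcard hU.
set N := (n1 * n2 * n3)%N.
have N0 : 0 < N%:R :> R by rewrite ltr0n.
have m0 : 0 < m%:R :> R by rewrite ltr0n.
have L0 : 0 < L%:R :> R by rewrite ltr0n.
set dd := Num.min _ _.
have dd1 : dd <= (b - zeta) ^+ 2 by rewrite /dd ge_min lexx.
have dd2 : dd <= zeta * N%:R / (m%:R * L%:R) by rewrite /dd ge_min lexx orbT.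
have dd0 : 0 <= dd.
  rewrite /dd le_min sqr_ge0 /=; apply: divr_ge0; [apply: mulr_ge0|apply: mulr_ge0]; lra.
set delta := Num.sqrt dd.
have d2 : delta ^+ 2 = dd by rewrite sqr_sqrtr.
have d0 : 0 <= delta := sqrtr_ge0 dd.
have dle : delta <= b - zeta.
  rewrite -(@ger0_norm _ (b - zeta)); last lra.
  by rewrite -sqrtr_sqr; apply: ler_wsqrtr.
rewrite -d2; apply: (@core R n1 n2 n3 r b s m zeta delta E blk) => //.
- move=> e.
  have c1 : #|[pred t | blk t == e]|%:R <= L%:R :> R by rewrite ler_nat.
  have g0 : 0 <= m%:R / N%:R :> R by apply: divr_ge0; lra.
  have e1 : L%:R * (m%:R / N%:R) * (zeta * N%:R / (m%:R * L%:R)) = zeta :> R.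
    by field; apply/and3P; split; apply: lt0r_neq0.
  rewrite d2; apply: le_trans (_ : L%:R * (m%:R / N%:R) * dd <= zeta).
    by apply: ler_wpM2r => //; apply: ler_wpM2r.
  rewrite -[X in _ <= X]e1; apply: ler_wpM2l => //; apply: mulr_ge0 => //; lra.
- by apply: hU => //; lra.
Qed.

Lemma D_bound (R : realType) (s n2 n3 r n1 L N : nat) :
  ((s + r * n1 * n3) * L <= 8 * N)%N ->
  (s%:R - (n2 * n3)%N%:R + (r * n1 * n3)%N%:R) * L%:R <= 8 * N%:R :> R.
Proof.
move=> h.
have h1 : s%:R - (n2 * n3)%N%:R + (r * n1 * n3)%N%:R <= (s + r * n1 * n3)%N%:R :> R.
  rewrite natrD; have : 0 <= (n2 * n3)%N%:R :> R by exact: ler0n. lra.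
have L0 : 0 <= L%:R :> R by exact: ler0n.
apply: le_trans (_ : (s + r * n1 * n3)%N%:R * L%:R <= _).
  exact: ler_wpM2r.
by rewrite -natrM -[8]/(8%N%:R) -natrM ler_nat.
Qed.

Unset Implicit Arguments.

Theorem proposition6 (R : realType) :
  exists (beta C : R), 0 < beta /\ beta < 1 /\ 0 < C /\
  forall (n1 n2 n3 r s m : nat) (b zeta : R),
  (2 <= n1)%N -> (2 <= n2)%N -> (2 <= n3)%N ->
  0 < b -> 0 < zeta -> zeta < b ->
  (r <= minn n1 n2)%N ->
  (n2 * n3 < s)%N -> (s <= r * n2 * n3)%N ->
  (1 <= m)%N -> (m <= n1 * n2 * n3)%N ->
  let varsigma := zeta / b in
  let Delta1 := Num.min 1 ((s%:R - (n2 * n3)%N%:R) / (n2 * n3)%N%:R) in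
  let Delta := Num.min ((1 - varsigma) ^+ 2) Delta1 in
  (minimax_risk n1 n2 n3 r b s m zeta >=
   (C * Num.min (Delta * b ^+ 2)
      (beta ^+ 2 * zeta * ((s%:R - (n2 * n3)%N%:R + (r * n1 * n3)%N%:R) / m%:R)))%:E)%E.
Proof.
exists (1/2), (1/16); split; [lra|split; [lra|split; [lra|]]].
move=> n1 n2 n3 r s m b zeta h1 h2 h3 b0 z0 zb hr hs1 hs2 hm1 hm2.
cbv zeta.
set varsigma := zeta / b.
set Delta := Num.min ((1 - varsigma) ^+ 2) _.
have Npos : (0 < n1 * n2 * n3)%N by rewrite !muln_gt0; apply/andP; split; [apply/andP; split|]; lia.
have n3pos : (0 < n3)%N by lia.
move: hr; rewrite leq_min => /andP[rn1 rn2].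
have rpos : (0 < r)%N.
  case: r hs2 {rn1 rn2} => [|r'] //; rewrite !mul0n => h; lia.
have hD : Delta * b ^+ 2 <= (b - zeta) ^+ 2.
  have e : (1 - varsigma) ^+ 2 * b ^+ 2 = (b - zeta) ^+ 2.
    by rewrite /varsigma; field; apply: lt0r_neq0.
  rewrite -e; apply: ler_wpM2r; first exact: sqr_ge0.
  by rewrite /Delta ge_min lexx.
have m0 : 0 < m%:R :> R by rewrite ltr0n.
have N0 : 0 < (n1 * n2 * n3)%N%:R :> R by rewrite ltr0n.
have fin : forall L : nat, (0 < L)%N ->
   ((s + r * n1 * n3) * L <= 8 * (n1 * n2 * n3))%N ->
   ((Num.min ((b - zeta) ^+ 2) (zeta * (n1 * n2 * n3)%N%:R / (m%:R * L%:R)) / 8)%:E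
     <= minimax_risk n1 n2 n3 r b s m zeta)%E ->
   ((1 / 16 * Num.min (Delta * b ^+ 2)
      ((1 / 2) ^+ 2 * zeta * ((s%:R - (n2 * n3)%N%:R + (r * n1 * n3)%N%:R) / m%:R)))%:E
     <= minimax_risk n1 n2 n3 r b s m zeta)%E.
  move=> L Lpos hL hm; apply: le_trans hm; rewrite lee_fin.
  have L0 : 0 < L%:R :> R by rewrite ltr0n.
  have := final_arith hD m0 L0 z0 N0 (D_bound R n2 hL).
  lra.
case: (leqP s (r * n1 * n3)) => hcase.
-
  set L := (n2 %/ r).+1.
  apply: (fin L) => //.
    have rL : (r * L <= 2 * n2)%N.
      rewrite /L mulnS; have := leq_trunc_div n2 r; rewrite mulnC; lia.
    have s1 : ((s + r * n1 * n3) * L <= (2 * (r * n1 * n3)) * L)%N.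
      by apply: leq_mul => //; lia.
    apply: leq_trans s1 _.
    have -> : (2 * (r * n1 * n3) * L = 2 * (n1 * n3) * (r * L))%N by ring.
    apply: leq_trans (_ : (2 * (n1 * n3) * (2 * n2) <= _)%N).
      by apply: leq_mul.
    have -> : (2 * (n1 * n3) * (2 * n2) = 4 * (n1 * n2 * n3))%N by ring.
    by apply: leq_mul.
  apply: (@core2 R n1 n2 n3 r b s m zeta _ (@blkA n1 n2 n3 r rpos) L) => //.
  + by move=> e; exact: blkA_card.
  + move=> delta d0 hdb w; apply: UsetA => //.
    by apply: leq_trans (ltnW hs1); rewrite leq_pmulr.
-
  set g := (s %/ (n2 * n3))%N.
  have d0 : (0 < n2 * n3)%N by rewrite muln_gt0; apply/andP; split; lia.
  have gpos : (0 < g)%N by rewrite divn_gt0 // ltnW.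
  have gr : (g <= r)%N.
    have := leq_div2r (n2 * n3) hs2; rewrite -mulnA mulnK //.
  have gs : (g * n2 * n3 <= s)%N by rewrite -mulnA leq_trunc_div.
  have sg : (s <= 2 * (g * (n2 * n3)))%N.
    have := ltn_ceil s d0; rewrite -/g mulSn; have := leq_pmulr (n2 * n3) gpos.
    move=> a b'; lia.
  set L := (n1 %/ g).+1.
  apply: (fin L) => //.
    have gL : (g * L <= 2 * n1)%N.
      rewrite /L mulnS; have := leq_trunc_div n1 g; rewrite mulnC; lia.
    have s1 : ((s + r * n1 * n3) * L <= (2 * s) * L)%N.
      by apply: leq_mul => //; lia.
    apply: leq_trans s1 _.
    apply: leq_trans (_ : (2 * (2 * (g * (n2 * n3))) * L <= _)%N).
      by apply: leq_mul => //; lia.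
    have -> : (2 * (2 * (g * (n2 * n3))) * L = 4 * (n2 * n3) * (g * L))%N by ring.
    apply: leq_trans (_ : (4 * (n2 * n3) * (2 * n1) <= _)%N).
      by apply: leq_mul.
    have -> : (4 * (n2 * n3) * (2 * n1) = 8 * (n1 * n2 * n3))%N by ring.
    by [].
  apply: (@core2 R n1 n2 n3 r b s m zeta _ (@blkB n1 n2 n3 g gpos) L) => //.
  + by move=> e; exact: blkB_card.
  + move=> delta dl hdb w; apply: UsetB => //.
Qed.
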